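(* Let $\mathcal M$ be a local Moufang set with basis $(0,\infty)$. Then, as subsets of the little projective group, $U_0^\circ\,U_\infty\subseteq U_\infty\,H\,U_0^\circ$.
   Context: Group actions are right actions, written $xg$; conjugation is $g^h=h^{-1}gh$. For a set $X$ with an equivalence relation $\sim$, $\overline{x}$ denotes the class of $x$, $\overline X$ the set of classes, and $\mathrm{Sym}(X,\sim)$ the group of bijections $g$ of $X$ with $x\sim y\iff xg\sim yg$; each such $g$ induces a permutation $\overline g$ of $\overline X$, and for a subgroup $U\le \mathrm{Sym}(X,\sim)$, $\overline U$ is the induced group of permutations of $\overline X$. A local Moufang set consists of a set with equivalence relation $(X,\sim)$ with $|\overline X|>2$ and, for each $x\in X$, a subgroup (root group) $U_x\le\mathrm{Sym}(X,\sim)$ such that: (LM0) if $x\sim y$ then $\overline{U_x}=\overline{U_y}$; (LM1) $U_x$ fixes $x$ and acts sharply transitively on $X\setminus\overline x$; (LM1') $\overline{U_x}$ fixes $\overline x$ and acts sharply transitively on $\overline X\setminus\{\overline x\}$; (LM2) $U_x^g=U_{xg}$ for all $x\in X$ and all $g$ in the little projective group $G:=\langle U_x\mid x\in X\rangle$. A basis is a fixed pair $(0,\infty)$ with $0\not\sim\infty$. For $x\not\sim\infty$, $\alpha_x$ is the unique element of $U_\infty$ with $0\alpha_x=x$. A unit is $x\in X$ with $x\not\sim0$, $x\not\sim\infty$; for a unit $x$, $\mu_x$ is the unique element of $U_0\alpha_xU_0$ interchanging $0$ and $\infty$. The Hua subgroup is $H:=\langle\mu_x\mu_y\mid x,y\text{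 units}\rangle$. For $x\in X$, $U_x^\circ:=\{u\in U_x\mid \overline u=\mathrm{id}_{\overline X}\}$. *)

(* Defs.v *)
(* Conventions: group elements are maps f : X -> X; right actions x g are
   written (g x); a product g h (first g, then h) is the map fun z => h (g z). *)

Section LMS.
Variable X : Type.
Variable eqv : X -> X -> Prop.

Definition is_equivalence : Prop :=
  (forall x, eqv x x) /\ (forall x y, eqv x y -> eqv y x) /\
  (forall x y z, eqv x y -> eqv y z -> eqv x z).

Definition inverse_map (s t : X -> X) : Prop :=
  (forall z, t (s z) = z) /\ (forall z, s (t z) = z).

Definition in_Sym (f : X -> X) : Prop :=
  (exists g, inverse_map f g) /\ (forall x y, eqv x y <-> eqv (f x) (f y)).

Definition subgroup_Sym (V : (X -> X) -> Prop) : Prop :=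
  (forall u, V u -> in_Sym u) /\
  V (fun z => z) /\
  (forall u v, V u -> V v -> V (fun z => v (u z))) /\
  (forall u, V u -> exists v, V v /\ inverse_map u v).

Inductive gen (S : (X -> X) -> Prop) : (X -> X) -> Prop :=
| gen_id : gen S (fun z => z)
| gen_mul : forall g s, gen S g -> S s -> gen S (fun z => s (g z))
| gen_mulinv : forall g s t, gen S g -> S s -> inverse_map s t ->
    gen S (fun z => t (g z)).

Variable U : X -> (X -> X) -> Prop.

Definition little_proj_group : (X -> X) -> Prop :=
  gen (fun g => exists x, U x g).

Definition is_local_moufang_set : Prop :=
  is_equivalence /\
  (exists a b c, ~ eqv a b /\ ~ eqv a c /\ ~ eqv b c) /\
  (forall x, subgroup_Sym (U x)) /\
  (* (LM0): x ~ y -> bar(U_x) = bar(U_y) *)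
  (forall x y, eqv x y -> forall u, U x u ->
     exists v, U y v /\ forall w, eqv (u w) (v w)) /\
  (forall x u, U x u -> u x = x) /\
  (forall x y z, ~ eqv y x -> ~ eqv z x -> exists u, U x u /\ u y = z) /\
  (forall x y u v, ~ eqv y x -> U x u -> U x v -> u y = v y ->
     forall w, u w = v w) /\
  (* (LM1'): bar(U_x) fixes bar x and is sharply transitive on
     bar X \ {bar x} *)
  (forall x u, U x u -> eqv (u x) x) /\
  (forall x y z, ~ eqv y x -> ~ eqv z x -> exists u, U x u /\ eqv (u y) z) /\
  (forall x y u v, ~ eqv y x -> U x u -> U x v -> eqv (u y) (v y) ->
     forall w, eqv (u w) (v w)) /\
  (* (LM2): U_x^g = U_{xg} for g in G, i.e.
     v in U_{xg}  <->  v = g^-1 u g for some u in U_x  <->  g v = u g *)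
  (forall g, little_proj_group g -> forall x v,
     U (g x) v <-> exists u, U x u /\ forall z, v (g z) = g (u z)).

Variables zero inf : X.

Definition is_alpha (x : X) (a : X -> X) : Prop := U inf a /\ a zero = x.

Definition is_unit (x : X) : Prop := ~ eqv x zero /\ ~ eqv x inf.

Definition is_mu (x : X) (m : X -> X) : Prop :=
  (exists u1 a u2, U zero u1 /\ is_alpha x a /\ U zero u2 /\
     forall z, m z = u2 (a (u1 z))) /\
  m zero = inf /\ m inf = zero.

Definition hua_subgroup : (X -> X) -> Prop :=
  gen (fun h => exists x y m1 m2, is_unit x /\ is_unit y /\
         is_mu x m1 /\ is_mu y m2 /\ forall z, h z = m2 (m1 z)).

Definition U_circ (x : X) (u : X -> X) : Prop :=
  U x u /\ forall z, eqv (u z) z.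

End LMS.

(* Main.v *)
Require Import Defs.
From Stdlib Require Import Classical.

Lemma gen_single X S s : S s -> gen X S s.
Proof. intro H. exact (gen_mul X S _ s (gen_id X S) H). Qed.

Lemma gen_app X S g h : gen X S g -> gen X S h -> gen X S (fun z => h (g z)).
Proof.
  intros H1 H2. induction H2.
  - exact H1.
  - exact (gen_mul X S _ s IHgen H).
  - exact (gen_mulinv X S _ s t IHgen H H0).
Qed.

Lemma gen_inv X S :
  (forall s, S s -> exists t, gen X S t /\ inverse_map X s t) ->
  forall g, gen X S g -> exists gi, gen X S gi /\ inverse_map X g gi.
Proof.
  intros HS g Hg. induction Hg.
  - exists (fun z => z). split; [apply gen_id | split; reflexivity].
  - destruct IHHg as (gi & Hgi & Hi1 & Hi2).
    destruct (HS s H) as (t & Ht & Ht1 & Ht2).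
    exists (fun z => gi (t z)). split; [exact (gen_app X S _ _ Ht Hgi)|].
    split; intro z; simpl; [rewrite Ht1; apply Hi1 | rewrite Hi2; apply Ht2].
  - destruct IHHg as (gi & Hgi & Hi1 & Hi2).
    exists (fun z => gi (s z)). split; [exact (gen_app X S _ _ (gen_single X S s H) Hgi)|].
    destruct H0 as [H1 H2].
    split; intro z; simpl; [rewrite H2; apply Hi1 | rewrite Hi2; apply H1].
Qed.

Theorem mainTheorem5 (X : Type) (eqv : X -> X -> Prop)
  (U : X -> (X -> X) -> Prop) (zero inf : X)
  (HLMS : is_local_moufang_set X eqv U) (Hbasis : ~ eqv zero inf) :
  forall a b, U_circ X eqv U zero a -> U inf b ->
    exists c h d, U inf c /\ hua_subgroup X eqv U zero inf h /\
      U_circ X eqv U zero d /\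
      forall z, b (a z) = d (h (c z)).
Proof.
  destruct HLMS as (Heqv & Hthree & Hsub & HLM0 & Hfix & Htr & Hsh & Hcfix & Hctr & Hcsh & HLM2).
  destruct Heqv as (Hrefl & Hsym & Htrn).
  assert (Hb' : ~ eqv inf zero) by (intro H; apply Hbasis; apply Hsym; exact H).
  assert (Hpres : forall x u, U x u -> forall y z, eqv y z <-> eqv (u y) (u z)).
  { intros x u Hu y z. destruct (Hsub x) as [Hs _]. destruct (Hs u Hu) as [_ P]. apply P. }
  assert (Hpf : forall x u, U x u -> forall y z, eqv y z -> eqv (u y) (u z)).
  { intros x u Hu y z. apply (proj1 (Hpres x u Hu y z)). }
  assert (Hpb : forall x u, U x u -> forall y z, eqv (u y) (u z) -> eqv y z).
  { intros x u Hu y z. apply (proj2 (Hpres x u Hu y z)). }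
  assert (Hmul : forall x u v, U x u -> U x v -> U x (fun z => v (u z))).
  { intros x u v Hu Hv. destruct (Hsub x) as (_ & _ & Hm & _). exact (Hm u v Hu Hv). }
  assert (Hinv : forall x u, U x u -> exists v, U x v /\ (forall z, v (u z) = z) /\ (forall z, u (v z) = z)).
  { intros x u Hu. destruct (Hsub x) as (_ & _ & _ & Hi). destruct (Hi u Hu) as (v & Hv & H1 & H2).
    exists v. auto. }
  assert (HG1 : forall x u, U x u -> little_proj_group X U u).
  { intros x u Hu. apply gen_single. exists x. exact Hu. }
  assert (HGinv : forall g, little_proj_group X U g -> exists gi, little_proj_group X U gi /\
            (forall z, gi (g z) = z) /\ (forall z, g (gi z) = z)).
  { intros g Hg. destruct (gen_inv X (fun g => exists x, U x g)) with (g := g) as (gi & Hgi & H1 & H2).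
    - intros s [x Hu]. destruct (Hinv x s Hu) as (v & Hv & H1 & H2).
      exists v. split; [exact (HG1 x v Hv) | split; assumption].
    - exact Hg.
    - exists gi. auto. }
  assert (Hconj : forall g gi, little_proj_group X U g -> little_proj_group X U gi ->
            (forall z, gi (g z) = z) -> (forall z, g (gi z) = z) ->
            forall x u, U x u -> exists v, U (g x) v /\ forall z, v (g z) = g (u z)).
  { intros g gi Hg Hgi H1 H2 x u Hu.
    assert (Hu' : U (gi (g x)) u) by (rewrite H1; exact Hu).
    destruct (proj1 (HLM2 gi Hgi (g x) u) Hu') as (u' & Hu'' & E).
    exists u'. split; [exact Hu''|]. intro z.
    rewrite <- (H2 (u' (g z))). rewrite <- E. rewrite H1. reflexivity. }
  assert (Hmu : forall b1 g b2, U inf b1 -> U zero g -> U inf b2 ->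
            b2 (g (b1 zero)) = inf -> b2 (g (b1 inf)) = zero ->
            (exists x, is_unit X eqv zero inf x /\ is_mu X U zero inf x (fun z => b2 (g (b1 z))))
            /\ little_proj_group X U (fun z => b2 (g (b1 z)))).
  { intros b1 g b2 Hb1 Hg Hb2 E0 Ei.
    set (s := fun z => b2 (g (b1 z))).
    assert (Gs : little_proj_group X U s).
    { unfold s. apply (gen_app _ _ (fun z => g (b1 z)) b2); [apply (gen_app _ _ b1 g)|];
      apply gen_single; eexists; eassumption. }
    split; [|exact Gs].
    destruct (HGinv s Gs) as (si & Gsi & S1 & S2).
    assert (s0 : s zero = inf) by exact E0.
    assert (si0 : s inf = zero) by exact Ei.
    destruct (Hconj s si Gs Gsi S1 S2 inf b1 Hb1) as (u1 & Hu1 & E1).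
    destruct (Hconj s si Gs Gsi S1 S2 zero g Hg) as (al & Hal & E2).
    destruct (Hconj s si Gs Gsi S1 S2 inf b2 Hb2) as (u2 & Hu2 & E3).
    rewrite si0 in Hu1, Hu2. rewrite s0 in Hal.
    assert (Eq : forall w, s w = u2 (al (u1 w))).
    { intro w. rewrite <- (S2 w). rewrite E1, E2, E3. reflexivity. }
    exists (al zero). split.
    - split.
      + intro H. apply Hb'.
        assert (H2 : eqv (u2 (al zero)) (u2 zero)) by (apply (Hpf _ _ Hu2); exact H).
        rewrite (Hfix _ _ Hu2) in H2. rewrite <- (Hfix _ _ Hu1) in H2 at 1.
        rewrite <- Eq, s0 in H2. exact H2.
      + intro H. apply Hbasis. apply (Hpb _ _ Hal). rewrite (Hfix _ _ Hal). exact H.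
    - split; [|split; assumption].
      exists u1, al, u2. repeat split; try assumption. }
  assert (Hbru : forall g bp, U zero g -> U inf bp -> bp zero = g inf ->
            ~ eqv (g inf) zero -> ~ eqv (g inf) inf ->
            exists c s, U inf c /\ (exists x, is_unit X eqv zero inf x /\ is_mu X U zero inf x s)
              /\ little_proj_group X U s /\ s zero = inf /\ s inf = zero /\
              forall z, g z = bp (s (c z))).
  { intros g bp Hg Hbp Ebp N0 Ni.
    destruct (Hinv _ _ Hg) as (gi & Hgi & G1 & G2).
    assert (Wi : ~ eqv (gi inf) inf).
    { intro H. apply Ni.
      assert (K : forall w, eqv (gi w) ((fun z => z) w)).
      { apply (Hcsh zero inf gi (fun z => z)); auto. destruct (Hsub zero) as (_ & I & _). exact I. }
      specialize (K (g inf)). simpl in K. rewrite G1 in K. apply Hsym. exact K. }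
    assert (W0 : ~ eqv (gi inf) zero).
    { intro H. apply Hb'. apply (Hpb _ _ Hgi). rewrite (Hfix _ _ Hgi). exact H. }
    destruct (Htr inf zero (gi inf) Hbasis Wi) as (b0 & Hb0 & Eb0).
    destruct (Hinv _ _ Hb0) as (b0i & Hb0i & B1 & B2).
    destruct (Hinv _ _ Hbp) as (bpi & Hbpi & P1 & P2).
    destruct (Hmu b0 g bpi Hb0 Hg Hbpi) as [Hm Gm].
    - rewrite Eb0, G2. apply (Hfix _ _ Hbpi).
    - rewrite (Hfix _ _ Hb0), <- Ebp. apply P1.
    - exists b0i, (fun z => bpi (g (b0 z))). repeat split; try assumption.
      + rewrite Eb0, G2. apply (Hfix _ _ Hbpi).
      + rewrite (Hfix _ _ Hb0), <- Ebp. apply P1.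
      + intro z. rewrite P2, B2. reflexivity. }
  assert (Hcase1 : forall a b, U_circ X eqv U zero a -> U inf b -> ~ eqv (b zero) zero ->
            exists c h d, U inf c /\ hua_subgroup X eqv U zero inf h /\
              little_proj_group X U h /\ h inf = inf /\ U_circ X eqv U zero d /\
              forall z, b (a z) = d (h (c z))).
  { intros a b [Ua Hac] Hb N.
    destruct (Hinv _ _ Hb) as (bi & Hbi & I1 & I2).
    assert (W0 : ~ eqv (bi zero) zero).
    { intro H. apply N. apply Hsym. rewrite <- (I2 zero) at 1. apply (Hpf _ _ Hb). exact H. }
    assert (Wi : ~ eqv (bi zero) inf).
    { intro H. apply Hbasis. apply (Hpb _ _ Hbi). rewrite (Hfix _ _ Hbi). exact H. }
    destruct (Htr zero inf (bi zero) Hb' W0) as (g2 & Hg2 & Eg2).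
    destruct (Hbru g2 bi Hg2 Hbi (eq_sym Eg2)) as (c2 & s2 & Hc2 & Ms2 & Gs2 & s20 & s2i & E2).
    { rewrite Eg2. exact W0. } { rewrite Eg2. exact Wi. }
    destruct (Hinv _ _ Hg2) as (g2i & Hg2i & J1 & J2).
    set (g1 := fun z => g2i (a z)).
    assert (Hg1 : U zero g1) by exact (Hmul _ _ _ Ua Hg2i).
    assert (N10 : ~ eqv (g1 inf) zero).
    { unfold g1. intro H. apply Hb'. apply (Htrn _ (a inf)); [apply Hsym; apply Hac|].
      apply (Hpb _ _ Hg2i). rewrite (Hfix _ _ Hg2i). exact H. }
    assert (N1i : ~ eqv (g1 inf) inf).
    { unfold g1. intro H.
      assert (H' : eqv (g2i inf) inf).
      { apply (Htrn _ (g2i (a inf))); [|exact H]. apply (Hpf _ _ Hg2i). apply Hsym. apply Hac. }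
      assert (K : forall w, eqv (g2i w) ((fun z => z) w)).
      { apply (Hcsh zero inf g2i (fun z => z)); auto. destruct (Hsub zero) as (_ & I & _). exact I. }
      specialize (K (g2 inf)). simpl in K. rewrite J1, Eg2 in K. apply Wi. apply Hsym. exact K. }
    destruct (Htr inf zero (g1 inf) Hbasis N1i) as (bp1 & Hbp1 & Ebp1).
    destruct (Hbru g1 bp1 Hg1 Hbp1 Ebp1 N10 N1i) as (c1 & s1 & Hc1 & Ms1 & Gs1 & s10 & s1i & E1).
    destruct (HGinv s2 Gs2) as (s2i' & Gs2i & S1 & S2).
    destruct (Hconj s2 s2i' Gs2 Gs2i S1 S2 inf (fun y => c2 (bp1 y)) (Hmul _ _ _ Hbp1 Hc2))
      as (d & Hd & Ed).
    rewrite s2i in Hd.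
    assert (Main : forall z, b (a z) = d (s2 (s1 (c1 z)))).
    { intro z. rewrite <- (J2 (a z)). fold (g1 z). rewrite E2, I2, E1. rewrite Ed. reflexivity. }
    exists c1, (fun z => s2 (s1 z)), d. repeat split.
    - exact Hc1.
    - apply gen_single. destruct Ms1 as (x1 & Ux1 & Mx1). destruct Ms2 as (x2 & Ux2 & Mx2).
      exists x1, x2, s1, s2. split; [exact Ux1|split; [exact Ux2|split;[exact Mx1|split;[exact Mx2|intro; reflexivity]]]].
    - apply gen_app; assumption.
    - simpl. rewrite s1i. exact s20.
    - exact Hd.
    - intro w.
      assert (K : forall w, eqv (d w) ((fun z => z) w)).
      { apply (Hcsh zero inf d (fun z => z)); auto.
        + destruct (Hsub zero) as (_ & I & _). exact I.
        + simpl. specialize (Main inf). rewrite (Hfix _ _ Hc1), s1i, s20 in Main.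
          rewrite <- Main. rewrite <- (Hfix _ _ Hb) at 2. apply (Hpf _ _ Hb). apply Hac. }
      exact (K w).
    - exact Main. }
  intros a b Ha Hbb.
  destruct (classic (eqv (b zero) zero)) as [Hb0 | Hb0].
  2:{ destruct (Hcase1 a b Ha Hbb Hb0) as (c & h & d & Hc & Hh & _ & _ & Hd & E).
      exists c, h, d. auto. }
  assert (He : exists e, ~ eqv e zero /\ ~ eqv e inf).
  { destruct Hthree as (p & q & r & Hpq & Hpr & Hqr).
    assert (Tri : forall y, (~ eqv y zero /\ ~ eqv y inf) \/ eqv y zero \/ eqv y inf).
    { intro y. destruct (classic (eqv y zero)); destruct (classic (eqv y inf)); tauto. }
    destruct (Tri p) as [P|P]; [eauto|].
    destruct (Tri q) as [Q|Q]; [eauto|].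
    destruct (Tri r) as [R|R]; [eauto|].
    exfalso. destruct P as [P|P]; destruct Q as [Q|Q]; destruct R as [R|R]; eauto 6. }
  destruct He as (e & e0 & ei).
  destruct (Htr inf zero e Hbasis ei) as (b1 & Hb1 & Eb1).
  destruct (Hinv _ _ Hb1) as (b1i & Hb1i & K1 & K2).
  set (b2 := fun z => b (b1i z)).
  assert (Hb2 : U inf b2) by exact (Hmul _ _ _ Hb1i Hbb).
  assert (N2 : ~ eqv (b2 zero) zero).
  { unfold b2. intro H. apply e0. apply Hsym.
    assert (H1 : eqv (b (b1i zero)) (b zero)) by (apply (Htrn _ zero); [exact H | apply Hsym; exact Hb0]).
    apply (Hpb _ _ Hbb) in H1. apply (Hpf _ _ Hb1) in H1. rewrite K2 in H1. rewrite <- Eb1. exact H1. }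
  destruct (Hcase1 a b1 Ha Hb1) as (c1 & h1 & d1 & Hc1 & Hh1 & Gh1 & h1i & Hd1 & E1).
  { rewrite Eb1. exact e0. }
  destruct (Hcase1 d1 b2 Hd1 Hb2 N2) as (c2 & h2 & d2 & Hc2 & Hh2 & _ & _ & Hd2 & E2).
  assert (Uc2 : U (h1 inf) c2) by (rewrite h1i; exact Hc2).
  destruct (proj1 (HLM2 h1 Gh1 inf c2) Uc2) as (c' & Hc' & Ec').
  exists (fun z => c' (c1 z)), (fun z => h2 (h1 z)), d2. repeat split.
  - exact (Hmul _ _ _ Hc1 Hc').
  - apply gen_app; assumption.
  - exact (proj1 Hd2).
  - exact (proj2 Hd2).
  - intro z. rewrite <- (K1 (a z)). fold (b2 (b1 (a z))). rewrite E1, E2, Ec'. reflexivity.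
Qed.
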